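(* Let $\psi:A\to A'$ be a contraction of dimer algebras (of dimer quivers $Q$, $Q'$ on a torus, obtained by contracting a set of arrows $Q_1^*\subseteq Q_1$), and suppose $Q'$ has a perfect matching. Then no unit cycle of $Q$ is contracted to a vertex by $\psi$; that is, no unit cycle of $Q$ has all of its arrows in $Q_1^*$.
   Context: $k$ is an algebraically closed field. A dimer quiver on a torus is a finite quiver $Q$ embedded in $T^2$ such that each connected component of $T^2\setminus Q$ is simply connected and bounded by an oriented cycle (a unit cycle). Paths compose right to left. The dimer algebra is $A=kQ/I$, $I=\langle p-q\mid\exists a\in Q_1: ap,aq\text{ unit cycles}\rangle$. A perfect matching is a set of arrows containing exactly one arrow of each unit cycle. Contractions: for $Q_1^*\subseteq Q_1$, $Q'$ is obtained by removing each arrow of $Q_1^*$ and identifying its head and tail; $\psi:kQ\to kQ'$ is the $k$-linear map sending vertices to their images, arrows not in $Q_1^*$ to themselves, $\delta\in Q_1^*$ to $e_{\operatorname{t}(\delta)}$, multiplicative on paths. If $Q'$ is a dimer quiver with dimer algebra $A'=kQ'/I'$ and $\psi(I)\subseteq I'$, $\psi$ is called a contraction of dimer algebras. *)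

(* Defs.v *)
From HB Require Import structures.
From mathcomp Require Import all_boot all_order all_algebra.
From mathcomp Require Import fingroup perm.
Set Implicit Arguments. Unset Strict Implicit. Unset Printing Implicit Defensive.
Import GRing.Theory.
Local Open Scope ring_scope.

(* A quiver with finite vertex type V and arrow type E, together with the two
   face permutations of a cellular embedding in an oriented surface:
   [sigp a] (resp. [sigm a]) is the arrow following [a] on the boundary of the
   unique "positive" (resp. "negative") face (unit cycle) containing [a]. *)
Record dimer (V E : finType) := Dimer {
  tl : E -> V;
  hd : E -> V;
  sigp : {perm E};
  sigm : {perm E}
}.

Section DimerDefs.
Variables (V E : finType) (D : dimer V E).

Definition adj : rel V :=
  fun x y => [exists a, ((tl D a == x) && (hd D a == y)) || ((hd D a == x) && (tl D a == y))].

(* rotation around a vertex, acting on incoming arrows *)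
Definition rot (a : E) : E := ((sigm D)^-1)%g (sigp D a).

(* D is a dimer quiver on a torus: the faces glue to a closed oriented
   surface (unit cycles are oriented cycles, each vertex has a single disc
   neighbourhood), the quiver is connected, and Euler characteristic
   V - E + F = 0, F = #positive faces + #negative faces. *)
Definition is_torus_dimer : Prop :=
  (forall a, tl D (sigp D a) = hd D a) /\
  (forall a, tl D (sigm D a) = hd D a) /\
  (0 < #|V|)%N /\
  (forall v, exists a, hd D a = v) /\
  (forall a b, hd D a = hd D b -> fconnect rot a b) /\
  (forall u v, connect adj u v) /\
  (#|V| + (fcard (sigp D) predT + fcard (sigm D) predT) = #|E|)%N.

Definition perfect_matching (M : {set E}) : Prop :=
  forall a, #|[set b in M | fconnect (sigp D) a b]| = 1%N /\
            #|[set b in M | fconnect (sigm D) a b]| = 1%N.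

(* Paths: (start vertex, arrows in order of traversal). *)
Definition qpath := (V * seq E)%type.

Definition valid (p : qpath) : bool :=
  if p.2 is a :: s then (tl D a == p.1) && sorted (fun b c => hd D b == tl D c) (a :: s)
  else true.

Definition qend (p : qpath) : V := last p.1 (map (hd D) p.2).

Definition pcomp (p q : qpath) : option qpath :=
  if qend p == q.1 then Some (p.1, p.2 ++ q.2) else None.

(* for an arrow a: the paths p with a p the positive / negative unit cycle *)
Definition restp (a : E) : qpath :=
  (hd D a, traject (sigp D) (sigp D a) (fingraph.order (sigp D) a).-1).
Definition restm (a : E) : qpath :=
  (hd D a, traject (sigm D) (sigm D a) (fingraph.order (sigm D) a).-1).

Variable k : fieldType.

Definition coef (L : seq (k * qpath)) (r : qpath) : k :=
  \sum_(x <- L) x.1 * (x.2 == r)%:R.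

Definition ind (o : option qpath) (r : qpath) : k :=
  if o is Some p then (p == r)%:R else 0.

(* the path-algebra product x * p * y (right-to-left: first y, then p, then x) *)
Definition triple (x p y : qpath) : option qpath :=
  obind (fun w => pcomp w x) (pcomp y p).

(* f lies in the two-sided ideal I generated by the p - q (ap, aq unit cycles):
   f is a finite linear combination of x (p - q) y with x, y paths. *)
Definition in_I (f : qpath -> k) : Prop :=
  exists G : seq (k * qpath * E * qpath),
    all (fun t => valid t.1.1.2 && valid t.2) G /\
    forall r, f r = \sum_(t <- G) t.1.1.1 *
                (ind (triple t.1.1.2 (restp t.1.2) t.2) r -
                 ind (triple t.1.1.2 (restm t.1.2) t.2) r).

End DimerDefs.

(* Q' is obtained from Q by contracting the arrows in S:
   pi identifies vertices joined by arrows of S, and j : E -> option E'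
   deletes the arrows of S and is a bijection from the others onto E'. *)
Definition is_contraction (V E V' E' : finType) (D : dimer V E) (S : {set E})
    (D' : dimer V' E') (pi : V -> V') (j : E -> option E') : Prop :=
  (forall a, j a = None <-> a \in S) /\
  (forall a b a', j a = Some a' -> j b = Some a' -> a = b) /\
  (forall a', exists a, j a = Some a') /\
  (forall a a', j a = Some a' -> tl D' a' = pi (tl D a) /\ hd D' a' = pi (hd D a)) /\
  (forall v', exists v, pi v = v') /\
  (forall u v, pi u = pi v <->
        connect (fun x y => [exists a in S, ((tl D a == x) && (hd D a == y))
                                          || ((hd D a == x) && (tl D a == y))]) u v).

Definition psi_path (V E V' E' : finType) (pi : V -> V') (j : E -> option E')
    (p : qpath V E) : qpath V' E' := (pi p.1, pmap j p.2).

Definition psi_lin (k : fieldType) (V E V' E' : finType) (pi : V -> V')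
    (j : E -> option E') (L : seq (k * qpath V E)) : seq (k * qpath V' E') :=
  map (fun x => (x.1, psi_path pi j x.2)) L.

(* Main.v *)
Require Import Defs.
From HB Require Import structures.
From mathcomp Require Import all_boot all_order all_algebra.
From mathcomp Require Import fingroup perm.
From mathcomp Require Import ring.
Set Implicit Arguments. Unset Strict Implicit.
Import GRing.Theory.

Section Gen.
Variables (T : finType) (s : {perm T}).

Lemma orbit_cons x : orbit s x = x :: traject s (s x) (fingraph.order s x).-1.
Proof. by rewrite /orbit -{1}(prednK (fingraph.order_gt0 s x)) trajectS. Qed.

Lemma count_orbit (p : pred T) x :
  count p (orbit s x) = #|[set y | fconnect s x y & p y]|.
Proof.
rewrite -size_filter -(card_uniqP (filter_uniq _ (orbit_uniq s x))).
by apply: eq_card => y; rewrite mem_filter inE fconnect_orbit andbC.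
Qed.

Variables (V : eqType) (tl hd : T -> V).
Hypothesis Hs : forall a, tl (s a) = hd a.

Lemma last_traject b m : last (hd b) (map hd (traject s (s b) m)) = hd (iter m s b).
Proof. by elim: m b => [|m IH] b //=; rewrite IH -iterSr. Qed.

Lemma qend_gen b : last (hd b) (map hd (traject s (s b) (fingraph.order s b).-1)) = tl b.
Proof.
rewrite last_traject -[in RHS](iter_order (@perm_inj _ s) b).
move: (fingraph.order_gt0 s b); case: (fingraph.order s b) => // n _ /=.
by rewrite Hs.
Qed.

Lemma sorted_gen b : match traject s (s b) (fingraph.order s b).-1 with
   | a :: l => (tl a == hd b) && sorted (fun b c => hd b == tl c) (a :: l)
   | [::] => true end.
Proof.
case: (fingraph.order s b).-1 => //= n.
rewrite Hs eqxx /=.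
by apply: sub_path (fpath_traject _ _ _) => x y /eqP <-; rewrite Hs.
Qed.
End Gen.

Local Open Scope ring_scope.
Section DD.
Variables (V E : finType) (D : dimer V E).
Hypothesis Htl : forall a, tl D (sigp D a) = hd D a.
Hypothesis Htm : forall a, tl D (sigm D a) = hd D a.

Lemma qend_restp b : qend D (restp D b) = tl D b.
Proof. exact: qend_gen. Qed.
Lemma qend_restm b : qend D (restm D b) = tl D b.
Proof. exact: qend_gen. Qed.
Lemma valid_restp b : valid D (restp D b).
Proof. exact: sorted_gen. Qed.
Lemma valid_restm b : valid D (restm D b).
Proof. exact: sorted_gen. Qed.

Lemma triple_eq x P y : triple D x P y =
  if (qend D y == P.1) && (qend D P == x.1) then Some (y.1, y.2 ++ P.2 ++ x.2) else None.
Proof.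
rewrite /triple /Defs.pcomp; case: (qend D y =P P.1) => Hy //=.
have -> : qend D (y.1, y.2 ++ P.2) = qend D P.
  by rewrite /qend /= map_cat last_cat; rewrite /qend in Hy; rewrite Hy.
by case: eqP => //; rewrite catA.
Qed.

Definition oseq (o : option (qpath V E)) := if o is Some p then [:: p] else [::].

Lemma deg_eq (k : fieldType) (M : {set E}) (HM : perfect_matching D M) (P Q : qpath V E) :
  in_I D (coef [:: (1%R : k, P); ((-1)%R, Q)]) -> count (mem M) P.2 = count (mem M) Q.2.
Proof.
case=> G [_ HG].
pose deg (r : qpath V E) := count (mem M) r.2.
pose d := deg P.
pose w r : k := ((deg r == d) : nat)%:R.
pose R := undup (P :: Q :: flatten [seq oseq (triple D t.1.1.2 (restp D t.1.2) t.2)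
                  ++ oseq (triple D t.1.1.2 (restm D t.1.2) t.2) | t <- G]).
have sumI : forall o, (forall p, o = Some p -> p \in R) ->
    \sum_(r <- R) w r * ind k o r = (if o is Some p then w p else 0).
  case => [p|] Hp; last by rewrite big1 // => r _; rewrite /ind mulr0.
  rewrite (big_rem p) ?Hp //= eqxx mulr1 big1_seq ?addr0 // => r /andP[_ Hr].
  have : p != r by apply: contraTneq Hr => <-; rewrite mem_rem_uniqF ?undup_uniq.
  by move/negbTE ->; rewrite mulr0.
have cM : forall a, count (mem M) (restp D a).2 = count (mem M) (restm D a).2.
  move=> a; have [H1 H2] := HM a.
  have E1 : count (mem M) (orbit (sigp D) a) = 1%N.
    by rewrite count_orbit -H1; apply: eq_card => y; rewrite !inE andbC.
  have E2 : count (mem M) (orbit (sigm D) a) = 1%N.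
    by rewrite count_orbit -H2; apply: eq_card => y; rewrite !inE andbC.
  rewrite !orbit_cons /= in E1 E2.
  by apply/eqP; rewrite -(eqn_add2l (a \in M)) E1 E2.
have key : \sum_(r <- R) w r * coef [:: (1%R : k, P); ((-1)%R, Q)] r =
           \sum_(r <- R) w r * \sum_(t <- G) t.1.1.1 *
                (ind k (triple D t.1.1.2 (restp D t.1.2) t.2) r -
                 ind k (triple D t.1.1.2 (restm D t.1.2) t.2) r).
  by apply: eq_bigr => r _; rewrite HG.
have L1 : forall r, coef [:: (1%R : k, P); ((-1)%R, Q)] r = ind k (Some P) r - ind k (Some Q) r.
  by move=> r; rewrite /coef !big_cons big_nil /= mul1r mulN1r addr0.
have inR1 : P \in R by rewrite mem_undup inE eqxx.
have inR2 : Q \in R by rewrite mem_undup !inE eqxx orbT.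
have inRG : forall t o, t \in G -> (o = triple D t.1.1.2 (restp D t.1.2) t.2 \/
                                    o = triple D t.1.1.2 (restm D t.1.2) t.2) ->
            forall p, o = Some p -> p \in R.
  move=> t o Ht Ho p Hp; rewrite mem_undup !inE; apply/orP; right; apply/orP; right.
  apply/flattenP; exists (oseq (triple D t.1.1.2 (restp D t.1.2) t.2)
                  ++ oseq (triple D t.1.1.2 (restm D t.1.2) t.2)).
    by apply: (map_f (fun t => _ ++ _)).
  by rewrite mem_cat; case: Ho => <-; rewrite Hp inE eqxx ?orbT.
move: key.
rewrite (eq_bigr (fun r => w r * ind k (Some P) r - w r * ind k (Some Q) r)); last first.
  by move=> r _; rewrite L1 mulrBr.
rewrite sumrB !sumI; try by move=> p [<-].
rewrite (_ : \sum_(r <- R) _ = 0).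
  rewrite /w eqxx => /eqP; rewrite subr_eq0; case: (deg Q =P d) => [HQ _ | _]; first by move: HQ; rewrite /d /deg => ->.
  by rewrite oner_eq0.
under eq_bigr => r _ do rewrite mulr_sumr.
rewrite exchange_big /= big1_seq // => t /andP[_ Ht].
rewrite (_ : \sum_(i <- R) _ = \sum_(i <- R) t.1.1.1 * (w i * ind k (triple D t.1.1.2 (restp D t.1.2) t.2) i - w i * ind k (triple D t.1.1.2 (restm D t.1.2) t.2) i)); last first.
  by apply: eq_bigr => r _; ring.
rewrite -mulr_sumr sumrB !sumI; first last.
- by apply: inRG Ht _; left.
- by apply: inRG Ht _; right.
rewrite !triple_eq qend_restp qend_restm /=.
case: ifP => _; last by rewrite subrr mulr0.
by rewrite /w /deg /= !count_cat cM subrr mulr0.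
Qed.
End DD.
Local Close Scope ring_scope.
Unset Implicit Arguments. Set Strict Implicit.

Lemma count_pmap (E E' : finType) (j : E -> option E') (M : {set E'}) s :
  count (mem M) (pmap j s) = count (fun e => if j e is Some e' then e' \in M else false) s.
Proof. by elim: s => //= x s IH; case: (j x) => [y|] /=; rewrite IH. Qed.

Theorem lemma3p5 (k : closedFieldType) (V E V' E' : finType)
    (D : dimer V E) (D' : dimer V' E') (S : {set E})
    (pi : V -> V') (j : E -> option E') :
  is_torus_dimer D -> is_torus_dimer D' ->
  is_contraction D S D' pi j ->
  (* psi(I) is contained in I' *)
  (forall L : seq (k * qpath V E),
      all (fun x => valid D x.2) L ->
      in_I D (coef L) -> in_I D' (coef (psi_lin pi j L))) ->
  (exists M : {set E'}, perfect_matching D' M) ->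
  forall a : E,
    ~ (forall b, fconnect (sigp D) a b -> b \in S) /\
    ~ (forall b, fconnect (sigm D) a b -> b \in S).
Proof.
move=> HD HD' HC Hid [M HM] a0.
case: HD => Htl [Htm [_ [Hin [Hrot [Hconn _]]]]].
case: HD' => Htl' [Htm' [Hpos' [Hin' _]]].
case: HC => Hj [_ [Hjs _]].
pose phi e := if j e is Some e' then e' \in M else false.
have step1 : forall b, count phi (restp D b).2 = count phi (restm D b).2.
  move=> b.
  have := Hid [:: (1%R, restp D b); ((-1)%R, restm D b)].
  rewrite /= valid_restp // valid_restm // => /(_ isT).
  case.
    exists [:: (1%R, (qend D (restp D b), [::]), b, (hd D b, [::]))]; split => // r.
    rewrite /coef !big_cons !big_nil /= !triple_eq // qend_restp // qend_restm //= !eqxx /=.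
    rewrite !cats0 /ind /=; ring.
  move=> G HG.
  have := deg_eq Htl' Htm' HM (ex_intro _ G HG).
  by rewrite /= !count_pmap.
pose G e := count phi (orbit (sigp D) e).
pose H e := count phi (orbit (sigm D) e).
have GH : forall e, G e = H e by move=> e; rewrite /G /H !orbit_cons /= step1.
have Gp : forall e, G (sigp D e) = G e.
  move=> e; rewrite /G !count_orbit; apply: eq_card => y.
  by rewrite !inE -(same_fconnect1 (@perm_inj _ _)).
have Hm : forall e, H (sigm D e) = H e.
  move=> e; rewrite /H !count_orbit; apply: eq_card => y.
  by rewrite !inE -(same_fconnect1 (@perm_inj _ _)).
have Gm : forall e, G (sigm D e) = G e by move=> e; rewrite GH Hm -GH.
have Grot : forall e, G (Defs.rot D e) = G e.
  by move=> e; rewrite /Defs.rot -Gm permKV Gp.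
have Gsame : forall a b, hd D a = hd D b -> G a = G b.
  move=> a b /Hrot; rewrite fconnect_orbit => /trajectP [i _ ->].
  by elim: i => //= i IH; rewrite Grot.
have Gtl : forall c a, hd D a = tl D c -> G a = G c.
  move=> c a Ha; set a1 := ((sigp D)^-1)%g c.
  have Ha1 : hd D a1 = tl D c by rewrite -Htl /a1 permKV.
  by rewrite (Gsame a a1) ?Ha ?Ha1 // -Gp /a1 permKV.
have Gadj : forall x y a b, adj D x y -> hd D a = x -> hd D b = y -> G a = G b.
  move=> x y a b /existsP [c /orP [/andP [/eqP Htc /eqP Hhc] | /andP [/eqP Hhc /eqP Htc]]] Ha Hb.
    by rewrite (Gtl c a) ?Ha ?Htc // (Gsame c b) ?Hb ?Hhc.
  by rewrite (Gtl c b) ?Hb ?Htc // (Gsame c a) ?Ha ?Hhc.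
pose g0 := G a0.
pose Pv := [pred v | [forall e, (hd D e == v) ==> (G e == g0)]].
have PvE : forall v e, hd D e = v -> (v \in Pv) = (G e == g0).
  move=> v e He; apply/forallP/eqP => [/(_ e)|HG e'].
    by rewrite He eqxx => /eqP.
  by apply/implyP => /eqP He'; rewrite (Gsame e' e) ?He ?He' // HG.
have Pcl : closed (adj D) Pv.
  move=> x y Hxy; have [ax Hax] := Hin x; have [ay Hay] := Hin y.
  by rewrite (PvE x ax) // (PvE y ay) // (Gadj x y ax ay).
have Gconst : forall e, G e = g0.
  move=> e; apply/eqP; rewrite -(PvE (hd D e) e) //.
  by rewrite -(closed_connect Pcl (Hconn (hd D a0) (hd D e))) (PvE _ a0).
have Gpos : exists e, (0 < G e)%N.
  have [v' _] : exists v', v' \in [set: V'] by apply/card_gt0P; rewrite cardsT.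
  have [e' _] := Hin' v'.
  have [H1 _] := HM e'.
  have : (0 < #|[set b in M | fconnect (sigp D') e' b]|)%N by rewrite H1.
  case/card_gt0P => m; rewrite inE => /andP [Hm' _].
  have [e He] := Hjs m.
  exists e; rewrite /G orbit_cons /= /phi He Hm'.
  done.
have Gzero : forall (s : {perm E}), (forall b, fconnect s a0 b -> b \in S) ->
    count phi (orbit s a0) = 0%N.
  move=> s Hall; apply/eqP; rewrite eqn0Ngt -has_count; apply/hasPn => y.
  rewrite -fconnect_orbit => /Hall /Hj; by rewrite /phi => ->.
have [e He] := Gpos.
split => Hall.
  by move: He; rewrite Gconst /g0 /G Gzero.
by move: He; rewrite Gconst /g0 GH /H Gzero.
Qed.
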